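(* Let $a,b$ be positive integers with $3\mid a+1$ and $3\mid b+1$. If the Aztec rectangle $\mathcal{AR}_{a,b}$ has a cover by L-trominoes, then $\mathcal{AR}_{a+4,b+4}$ has a cover by L-trominoes.
   Context: A cell is a unit square $[i,i+1]\times[j,j+1]$ with $i,j\in\mathbb{Z}$, labelled $(i,j)$. An L-tromino is a set of three cells equal to a $2\times 2$ block of cells with one cell removed. A cover of a region $R$ (a finite edge-connected set of cells) is a set of pairwise disjoint L-trominoes contained in $R$ whose union is $R$. For positive integers $a,b$, the Aztec rectangle $\mathcal{AR}_{a,b}$ is (up to translation) the region consisting of the cells $(i,j)\in\mathbb{Z}^2$ with $0\le i+j\le 2b$ and $1\le j-i\le 2a+1$; it has $a$ cells along its southwestern side and $b$ cells along its northwestern side. *)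

(* Defs.v *)
From Stdlib Require Import ZArith List.
Open Scope Z_scope.

(* A cell (i,j) is the unit square [i,i+1] x [j,j+1]. *)
Definition cell := (Z * Z)%type.

Definition region := cell -> Prop.

Definition in_block (x y : Z) (c : cell) : Prop :=
  x <= fst c <= x + 1 /\ y <= snd c <= y + 1.

(* An L-tromino: a 2x2 block of cells with lower-left cell (x,y)
   with one cell (rx,ry) of the block removed. *)
Record tromino := Tromino { tx : Z; ty : Z; rx : Z; ry : Z }.

Definition valid_tromino (t : tromino) : Prop :=
  in_block (tx t) (ty t) (rx t, ry t).

Definition in_tromino (t : tromino) (c : cell) : Prop :=
  in_block (tx t) (ty t) c /\ c <> (rx t, ry t).

Definition is_cover (R : region) (ts : list tromino) : Prop :=
  (forall t, In t ts -> valid_tromino t) /\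
  (forall t, In t ts -> forall c, in_tromino t c -> R c) /\
  (forall c, R c -> exists t, In t ts /\ in_tromino t c) /\
  (forall i j t1 t2, (i < length ts)%nat -> (j < length ts)%nat -> i <> j ->
     nth_error ts i = Some t1 -> nth_error ts j = Some t2 ->
     forall c, ~ (in_tromino t1 c /\ in_tromino t2 c)).

Definition has_cover (R : region) : Prop := exists ts, is_cover R ts.

Definition aztec_rect (a b : Z) : region :=
  fun c => 0 <= fst c + snd c <= 2 * b /\ 1 <= snd c - fst c <= 2 * a + 1.

(* Main.v *)
Require Import Defs.
From Stdlib Require Import ZArith.
From Stdlib Require Import List Bool Lia.
Import ListNotations.
Open Scope Z_scope.

Definition disj (t1 t2 : tromino) : Prop :=
  forall c, ~ (in_tromino t1 c /\ in_tromino t2 c).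

Fixpoint pw (L : list tromino) : Prop :=
  match L with
  | nil => True
  | t :: L' => (forall t', In t' L' -> disj t t') /\ pw L'
  end.

Lemma disj_sym t1 t2 : disj t1 t2 -> disj t2 t1.
Proof. intros H c [H1 H2]. apply (H c); auto. Qed.

Lemma pw_nth L : pw L -> forall i j t1 t2, (i < length L)%nat -> (j < length L)%nat -> i <> j ->
     nth_error L i = Some t1 -> nth_error L j = Some t2 ->
     forall c, ~ (in_tromino t1 c /\ in_tromino t2 c).
Proof.
  induction L as [|t L IH]; simpl.
  - intros _ i j t1 t2 Hi; inversion Hi.
  - intros [H1 H2] i j t1 t2 Hi Hj Hij E1 E2. destruct i as [|i]; destruct j as [|j]; simpl in *.
    + congruence.
    + inversion E1; subst. apply H1. eapply nth_error_In; eauto.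
    + inversion E2; subst. apply disj_sym, H1. eapply nth_error_In; eauto.
    + apply (IH H2 i j t1 t2); auto; lia.
Qed.

Lemma nth_pw L : (forall i j t1 t2, (i < length L)%nat -> (j < length L)%nat -> i <> j ->
     nth_error L i = Some t1 -> nth_error L j = Some t2 ->
     forall c, ~ (in_tromino t1 c /\ in_tromino t2 c)) -> pw L.
Proof.
  induction L as [|t L IH]; simpl; intros H; auto. split.
  - intros t' Ht'. destruct (In_nth_error _ _ Ht') as [n Hn].
    assert (Hl : (n < length L)%nat) by (apply nth_error_Some; congruence).
    intro c. apply (H 0%nat (S n) t t'); simpl; auto; lia.
  - apply IH. intros i j t1 t2 Hi Hj Hij E1 E2.
    apply (H (S i) (S j) t1 t2); simpl; auto; lia.
Qed.

Lemma pw_app_reg L1 L2 (P1 P2 : cell -> Prop) :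
  pw L1 -> pw L2 ->
  (forall t c, In t L1 -> in_tromino t c -> P1 c) ->
  (forall t c, In t L2 -> in_tromino t c -> P2 c) ->
  (forall c, P1 c -> P2 c -> False) -> pw (L1 ++ L2).
Proof.
  induction L1 as [|t L1 IH]; simpl; intros H1 H2 R1 R2 X; auto.
  destruct H1 as [H1a H1b]. split.
  - intros t' Ht' c [Ha Hb]. apply in_app_or in Ht' as [Ht'|Ht'].
    + exact (H1a t' Ht' c (conj Ha Hb)).
    + eapply X; [eapply R1; eauto | eapply R2; eauto].
  - apply IH; eauto.
Qed.

Definition sh (dx dy : Z) (t : tromino) : tromino :=
  Tromino (tx t + dx) (ty t + dy) (rx t + dx) (ry t + dy).

Lemma in_sh dx dy t c :
  in_tromino (sh dx dy t) c <-> in_tromino t (fst c - dx, snd c - dy).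
Proof.
  destruct c as [x y]; destruct t as [a b r s]; unfold in_tromino, in_block, sh; simpl.
  split; intros [[H1 H2] H3]; (split; [lia|]); intro E; apply H3; inversion E; f_equal; lia.
Qed.

Lemma valid_sh dx dy t : valid_tromino t -> valid_tromino (sh dx dy t).
Proof. destruct t; unfold valid_tromino, in_block, sh; simpl; lia. Qed.

Lemma pw_sh dx dy L : pw L -> pw (map (sh dx dy) L).
Proof.
  induction L as [|t L IH]; simpl; [auto|]; intros [H1 H2]; split; auto.
  intros t' Ht' c [Ha Hb]. apply in_map_iff in Ht' as [t0 [<- Ht0]].
  rewrite in_sh in Ha, Hb. exact (H1 t0 Ht0 _ (conj Ha Hb)).
Qed.

Definition inb (t : tromino) (c : cell) : bool :=
  (tx t <=? fst c) && (fst c <=? tx t + 1) && (ty t <=? snd c) && (snd c <=? ty t + 1)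
  && negb ((fst c =? rx t) && (snd c =? ry t)).

Lemma inb_spec t c : inb t c = true <-> in_tromino t c.
Proof.
  destruct c as [x y]; destruct t as [a b r s]; unfold inb, in_tromino, in_block; simpl.
  rewrite !andb_true_iff, !Z.leb_le, negb_true_iff, <- not_true_iff_false,
    andb_true_iff, !Z.eqb_eq.
  split.
  - intros [[[[H1 H2] H3] H4] H5]. split; [lia|]. intro E; inversion E; auto.
  - intros [H1 H2]. repeat split; try lia. intros [-> ->]; auto.
Qed.

Definition blockcells (t : tromino) : list cell :=
  [(tx t, ty t); (tx t + 1, ty t); (tx t, ty t + 1); (tx t + 1, ty t + 1)].

Lemma in_block_cells t c : in_tromino t c -> In c (blockcells t).
Proof.
  destruct c as [x y]; destruct t as [a b r s]; unfold in_tromino, in_block, blockcells; simpl.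
  intros [[H1 H2] _].
  assert (x = a \/ x = a + 1) as [-> | ->] by lia;
  assert (y = b \/ y = b + 1) as [-> | ->] by lia; tauto.
Qed.

Definition contb (P : cell -> bool) (L : list tromino) : bool :=
  forallb (fun t => forallb (fun c => negb (inb t c) || P c) (blockcells t)) L.

Lemma contb_ok P L : contb P L = true ->
  forall t c, In t L -> in_tromino t c -> P c = true.
Proof.
  unfold contb; rewrite forallb_forall; intros H t c Ht Hc.
  specialize (H t Ht). rewrite forallb_forall in H.
  specialize (H c (in_block_cells _ _ Hc)).
  apply inb_spec in Hc. rewrite Hc in H. exact H.
Qed.

Fixpoint pwb (L : list tromino) : bool :=
  match L with
  | nil => true
  | t :: L' => forallb (fun t' => forallb (fun c => negb (inb t c && inb t' c)) (blockcells t)) L'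
               && pwb L'
  end.

Lemma pwb_ok L : pwb L = true -> pw L.
Proof.
  induction L as [|t L IH]; [simpl; auto|]. intros H. cbn [pwb pw] in *.
  apply andb_true_iff in H as [H1 H2]. split; auto.
  intros t' Ht' c [Ha Hb]. pose proof (proj1 (forallb_forall _ _) H1 t' Ht') as H3.
  clear H1; rename H3 into H1. rewrite forallb_forall in H1.
  specialize (H1 c (in_block_cells _ _ Ha)).
  apply inb_spec in Ha; apply inb_spec in Hb. rewrite Ha, Hb in H1. discriminate.
Qed.

Definition validb (t : tromino) : bool :=
  (tx t <=? rx t) && (rx t <=? tx t + 1) && (ty t <=? ry t) && (ry t <=? ty t + 1).

Lemma validb_ok L : forallb validb L = true -> forall t, In t L -> valid_tromino t.
Proof.
  rewrite forallb_forall; intros H t Ht; specialize (H t Ht).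
  unfold validb, valid_tromino, in_block in *; simpl.
  rewrite !andb_true_iff, !Z.leb_le in H; lia.
Qed.

Fixpoint allZ (lo : Z) (n : nat) (f : Z -> bool) : bool :=
  match n with O => true | S n' => f lo && allZ (lo + 1) n' f end.

Lemma allZ_ok lo n f : allZ lo n f = true -> forall x, lo <= x < lo + Z.of_nat n -> f x = true.
Proof.
  revert lo; induction n as [|n IH]; simpl; intros lo H x Hx; [lia|].
  rewrite andb_true_iff in H; destruct H as [H1 H2].
  destruct (Z.eq_dec x lo) as [->|Hne]; auto.
  apply (IH (lo + 1)); auto; lia.
Qed.

Definition covb (P : cell -> bool) (L : list tromino) : bool :=
  allZ (-7) 14 (fun i => allZ 0 14 (fun j =>
    negb (P (i, j)) || existsb (fun t => inb t (i, j)) L)).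

Lemma covb_ok P L : covb P L = true ->
  forall c, P c = true -> -7 <= fst c < 7 -> 0 <= snd c < 14 ->
  exists t, In t L /\ in_tromino t c.
Proof.
  unfold covb; intros H [x y] Hc Hx Hy; cbn [fst snd] in *.
  pose proof (allZ_ok _ _ _ H x ltac:(simpl; lia)) as H1.
  pose proof (allZ_ok _ _ _ H1 y ltac:(simpl; lia)) as H2.
  cbv beta in H2. rewrite Hc in H2; simpl in H2. apply existsb_exists in H2 as [t [Ht Hin]].
  exists t; split; auto. apply inb_spec; auto.
Qed.

Definition uvb (ulo uhi vlo vhi : Z) (c : cell) : bool :=
  (ulo <=? fst c + snd c) && (fst c + snd c <=? uhi) &&
  (vlo <=? snd c - fst c) && (snd c - fst c <=? vhi).

Lemma uvb_spec ulo uhi vlo vhi c : uvb ulo uhi vlo vhi c = true <->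
  ulo <= fst c + snd c <= uhi /\ vlo <= snd c - fst c <= vhi.
Proof. unfold uvb; rewrite !andb_true_iff, !Z.leb_le; tauto. Qed.

Definition frameb c := uvb 0 12 1 13 c && negb (uvb 0 4 1 5 c).
Definition pGA c := frameb c && (fst c + snd c <=? 2).
Definition pGB c := frameb c && (snd c - fst c <=? 3).
Definition pR c := frameb c && (3 <=? fst c + snd c) && (4 <=? snd c - fst c).
Definition pCA := uvb 3 8 6 13.
Definition pCB := uvb 5 12 4 9.

Lemma frameb_spec c : frameb c = true <->
  (0 <= fst c + snd c <= 12 /\ 1 <= snd c - fst c <= 13) /\
  ~ (0 <= fst c + snd c <= 4 /\ 1 <= snd c - fst c <= 5).
Proof.
  unfold frameb. rewrite andb_true_iff, negb_true_iff, <- not_true_iff_false, !uvb_spec. tauto.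
Qed.
Definition lGA : list tromino := [Tromino (-3) (3) (-2) (3); Tromino (-4) (4) (-3) (4); Tromino (-5) (5) (-4) (5); Tromino (-6) (6) (-5) (6)].
Definition lGB : list tromino := [Tromino (1) (3) (1) (3); Tromino (2) (4) (2) (4); Tromino (3) (5) (3) (5); Tromino (4) (6) (4) (6)].
Definition lR : list tromino := [Tromino (3) (7) (4) (7); Tromino (2) (8) (3) (8); Tromino (-5) (7) (-5) (7); Tromino (1) (9) (2) (9); Tromino (0) (10) (1) (10); Tromino (-1) (11) (0) (11); Tromino (-3) (10) (-3) (11); Tromino (-4) (8) (-4) (8); Tromino (-2) (9) (-2) (10); Tromino (-1) (8) (-1) (9); Tromino (-3) (7) (-3) (8); Tromino (-3) (5) (-3) (5); Tromino (1) (7) (2) (8); Tromino (1) (5) (2) (5); Tromino (-1) (6) (-1) (6); Tromino (-1) (5) (0) (6)].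
Definition lCA : list tromino := [Tromino (0) (6) (1) (6); Tromino (-1) (7) (0) (7); Tromino (-2) (8) (-1) (8); Tromino (-3) (9) (-2) (9); Tromino (-5) (8) (-5) (9); Tromino (-4) (7) (-4) (8); Tromino (-3) (6) (-3) (7); Tromino (-2) (5) (-2) (6)].
Definition lCB : list tromino := [Tromino (-2) (7) (-2) (8); Tromino (-1) (6) (-1) (7); Tromino (0) (5) (0) (6); Tromino (1) (6) (1) (6); Tromino (3) (7) (4) (7); Tromino (2) (8) (3) (8); Tromino (1) (9) (2) (9); Tromino (0) (8) (1) (9)].


Definition good (P : cell -> bool) (L : list tromino) : Prop :=
  (forall t c, In t L -> in_tromino t c -> P c = true) /\ pw L /\
  (forall t, In t L -> valid_tromino t) /\
  (forall c, P c = true -> -7 <= fst c < 7 -> 0 <= snd c < 14 ->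
     exists t, In t L /\ in_tromino t c).

Lemma good_of P L : contb P L && pwb L && forallb validb L && covb P L = true -> good P L.
Proof.
  rewrite !andb_true_iff; intros [[[H1 H2] H3] H4].
  split; [|split; [|split]].
  - apply contb_ok; auto.
  - apply pwb_ok; auto.
  - apply validb_ok; auto.
  - apply covb_ok; auto.
Qed.

Definition pbox (P : cell -> bool) := forall c, P c = true -> -7 <= fst c < 7 /\ 0 <= snd c < 14.

Lemma good_sh P L dx dy : good P L -> pbox P ->
  (forall t c, In t (map (sh dx dy) L) -> in_tromino t c -> P (fst c - dx, snd c - dy) = true) /\
  pw (map (sh dx dy) L) /\
  (forall t, In t (map (sh dx dy) L) -> valid_tromino t) /\
  (forall c, P (fst c - dx, snd c - dy) = true -> exists t, In t (map (sh dx dy) L) /\ in_tromino t c).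
Proof.
  intros [H1 [H2 [H3 H4]]] Hb. split; [|split; [|split]].
  - intros t c Ht Hc. apply in_map_iff in Ht as [t0 [<- Ht0]].
    rewrite in_sh in Hc. eapply H1; eauto.
  - apply pw_sh; auto.
  - intros t Ht. apply in_map_iff in Ht as [t0 [<- Ht0]]. apply valid_sh; auto.
  - intros c Hc. destruct (Hb _ Hc) as [B1 B2].
    destruct (H4 _ Hc B1 B2) as [t0 [Ht0 Hin]].
    exists (sh dx dy t0). split; [apply in_map; auto | rewrite in_sh; auto].
Qed.

Lemma pGA_spec c : pGA c = true <->
  ((0 <= fst c + snd c <= 12 /\ 1 <= snd c - fst c <= 13) /\
   ~ (0 <= fst c + snd c <= 4 /\ 1 <= snd c - fst c <= 5)) /\ fst c + snd c <= 2.
Proof. unfold pGA. rewrite andb_true_iff, frameb_spec, Z.leb_le. tauto. Qed.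
Lemma pGB_spec c : pGB c = true <->
  ((0 <= fst c + snd c <= 12 /\ 1 <= snd c - fst c <= 13) /\
   ~ (0 <= fst c + snd c <= 4 /\ 1 <= snd c - fst c <= 5)) /\ snd c - fst c <= 3.
Proof. unfold pGB. rewrite andb_true_iff, frameb_spec, Z.leb_le. tauto. Qed.
Lemma pR_spec c : pR c = true <->
  ((0 <= fst c + snd c <= 12 /\ 1 <= snd c - fst c <= 13) /\
   ~ (0 <= fst c + snd c <= 4 /\ 1 <= snd c - fst c <= 5)) /\ 3 <= fst c + snd c /\
   4 <= snd c - fst c.
Proof. unfold pR. rewrite !andb_true_iff, frameb_spec, !Z.leb_le. tauto. Qed.
Lemma pCA_spec c : pCA c = true <->
  3 <= fst c + snd c <= 8 /\ 6 <= snd c - fst c <= 13.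
Proof. apply uvb_spec. Qed.
Lemma pCB_spec c : pCB c = true <->
  5 <= fst c + snd c <= 12 /\ 4 <= snd c - fst c <= 9.
Proof. apply uvb_spec. Qed.

Lemma box_GA : pbox pGA. Proof. intros c H; apply pGA_spec in H; lia. Qed.
Lemma box_GB : pbox pGB. Proof. intros c H; apply pGB_spec in H; lia. Qed.
Lemma box_R : pbox pR. Proof. intros c H; apply pR_spec in H; lia. Qed.
Lemma box_CA : pbox pCA. Proof. intros c H; apply pCA_spec in H; lia. Qed.
Lemma box_CB : pbox pCB. Proof. intros c H; apply pCB_spec in H; lia. Qed.

Lemma good_GA : good pGA lGA. Proof. apply good_of; vm_compute; reflexivity. Qed.
Lemma good_GB : good pGB lGB. Proof. apply good_of; vm_compute; reflexivity. Qed.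
Lemma good_R : good pR lR. Proof. apply good_of; vm_compute; reflexivity. Qed.
Lemma good_CA : good pCA lCA. Proof. apply good_of; vm_compute; reflexivity. Qed.
Lemma good_CB : good pCB lCB. Proof. apply good_of; vm_compute; reflexivity. Qed.

Fixpoint rep (g : Z -> list tromino) (n : nat) : list tromino :=
  match n with O => nil | S n' => g (Z.of_nat n') ++ rep g n' end.

Lemma In_rep g n t : In t (rep g n) <-> exists j, 0 <= j < Z.of_nat n /\ In t (g j).
Proof.
  induction n as [|n IH]; simpl.
  - split; [tauto | intros [j [Hj _]]; lia].
  - rewrite in_app_iff, IH. split.
    + intros [H|[j [Hj H]]]; [exists (Z.of_nat n) | exists j]; split; auto; lia.
    + intros [j [Hj H]]. destruct (Z.eq_dec j (Z.of_nat n)) as [->|Hne]; auto.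
      right; exists j; split; auto; lia.
Qed.

Lemma pw_rep g n (Q : Z -> cell -> Prop) :
  (forall j, pw (g j)) -> (forall j t c, In t (g j) -> in_tromino t c -> Q j c) ->
  (forall j1 j2 c, j1 <> j2 -> Q j1 c -> Q j2 c -> False) -> pw (rep g n).
Proof.
  intros H1 H2 H3. induction n as [|n IH]; simpl; auto.
  apply pw_app_reg with (P1 := Q (Z.of_nat n))
    (P2 := fun c => exists j, 0 <= j < Z.of_nat n /\ Q j c); auto.
  - intros t c Ht Hc. eauto.
  - intros t c Ht Hc. apply In_rep in Ht as [j [Hj Ht]]. exists j; split; eauto.
  - intros c Hq [j [Hj Hq']]. apply (H3 (Z.of_nat n) j c); auto; lia.
Qed.


Lemma pw_app2 L1 L2 : pw L1 -> pw L2 ->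
  (forall t1 t2 c, In t1 L1 -> In t2 L2 -> in_tromino t1 c -> in_tromino t2 c -> False) ->
  pw (L1 ++ L2).
Proof.
  intros H1 H2 H3.
  apply pw_app_reg with (P1 := fun c => exists t, In t L1 /\ in_tromino t c)
    (P2 := fun c => exists t, In t L2 /\ in_tromino t c); auto.
  - intros t c Ht Hc; exists t; auto.
  - intros t c Ht Hc; exists t; auto.
  - intros c [t1 [A B]] [t2 [C D]]; eauto.
Qed.

Ltac rg H Hc :=
  match type of H with
  | In _ (_ ++ _) => apply in_app_or in H; destruct H as [H|H]; rg H Hc
  | In _ (rep _ _) => apply In_rep in H; destruct H as [?j [?Hj H]]; rg H Hc
  | _ => first [ match goal with R : forall t c, In t _ -> in_tromino t c -> _ |- _ =>
                   pose proof (R _ _ H Hc) end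
               | match goal with R : forall j t c, In t _ -> in_tromino t c -> _ |- _ =>
                   pose proof (R _ _ _ H Hc) end ]
  end.

Theorem lemma3 (a b : Z) (ha : 0 < a) (hb : 0 < b)
  (h3a : (3 | a + 1)) (h3b : (3 | b + 1)) :
  has_cover (aztec_rect a b) -> has_cover (aztec_rect (a + 4) (b + 4)).
Proof.
  intros [ts [Hv [Hc0 [Hcov Hd]]]].
  apply nth_pw in Hd.
  destruct h3a as [qa Hqa]. destruct h3b as [qb Hqb].
  remember (Z.to_nat (qa - 1)) as k eqn:Ek.
  remember (Z.to_nat (qb - 1)) as m eqn:Em.
  assert (HK : Z.of_nat k = qa - 1) by (subst k; rewrite Z2Nat.id; lia).
  assert (HM : Z.of_nat m = qb - 1) by (subst m; rewrite Z2Nat.id; lia).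
  set (K := Z.of_nat k) in *. set (M := Z.of_nat m) in *.
  assert (Ea : a = 3 * K + 2) by lia. assert (Eb : b = 3 * M + 2) by lia.
  subst a b. assert (HK0 : 0 <= K) by lia. assert (HM0 : 0 <= M) by lia.
  clear Hqa Hqb HK HM Ek Em.
  destruct (good_sh _ _ (-3*K) (3*K) good_GA box_GA) as [cGA [pwGA [vGA kGA]]].
  destruct (good_sh _ _ (3*M) (3*M) good_GB box_GB) as [cGB [pwGB [vGB kGB]]].
  destruct (good_sh _ _ (3*M-3*K) (3*M+3*K) good_R box_R) as [cR [pwR [vR kR]]].
  set (LGA := map (sh (-3*K) (3*K)) lGA) in *.
  set (LGB := map (sh (3*M) (3*M)) lGB) in *.
  set (LR := map (sh (3*M-3*K) (3*M+3*K)) lR) in *.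
  set (gA := fun j => map (sh (3*j - 3*K) (3*j + 3*K)) lCA).
  set (gB := fun j => map (sh (3*M - 3*j) (3*M + 3*j)) lCB).
  assert (cA : forall j t c, In t (gA j) -> in_tromino t c ->
     6*j+3 <= fst c + snd c <= 6*j+8 /\ 6*K+6 <= snd c - fst c <= 6*K+13).
  { intros j t c Ht Hc. destruct (good_sh _ _ (3*j-3*K) (3*j+3*K) good_CA box_CA) as [h _].
    pose proof (h t c Ht Hc) as P. apply pCA_spec in P. cbn [fst snd] in P. lia. }
  assert (cB : forall j t c, In t (gB j) -> in_tromino t c ->
     6*M+5 <= fst c + snd c <= 6*M+12 /\ 6*j+4 <= snd c - fst c <= 6*j+9).
  { intros j t c Ht Hc. destruct (good_sh _ _ (3*M-3*j) (3*M+3*j) good_CB box_CB) as [h _].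
    pose proof (h t c Ht Hc) as P. apply pCB_spec in P. cbn [fst snd] in P. lia. }
  assert (rGA : forall t c, In t LGA -> in_tromino t c ->
     0 <= fst c + snd c <= 2 /\ 6*K+6 <= snd c - fst c <= 6*K+13).
  { intros t c Ht Hc; pose proof (cGA t c Ht Hc) as P; apply pGA_spec in P;
    cbn [fst snd] in P; lia. }
  assert (rGB : forall t c, In t LGB -> in_tromino t c ->
     6*M+5 <= fst c + snd c <= 6*M+12 /\ 1 <= snd c - fst c <= 3).
  { intros t c Ht Hc; pose proof (cGB t c Ht Hc) as P; apply pGB_spec in P;
    cbn [fst snd] in P; lia. }
  assert (rR : forall t c, In t LR -> in_tromino t c ->
     6*M+3 <= fst c + snd c <= 6*M+12 /\ 6*K+4 <= snd c - fst c <= 6*K+13 /\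
     (fst c + snd c > 6*M+4 \/ snd c - fst c > 6*K+5)).
  { intros t c Ht Hc; pose proof (cR t c Ht Hc) as P; apply pR_spec in P;
    cbn [fst snd] in P; lia. }
  assert (rOld : forall t c, In t ts -> in_tromino t c ->
     0 <= fst c + snd c <= 2*(3*M+2) /\ 1 <= snd c - fst c <= 2*(3*K+2)+1).
  { intros t c Ht Hc; exact (Hc0 t Ht c Hc). }
  clear cGA cGB cR.
  exists (ts ++ LGA ++ LGB ++ LR ++ rep gA m ++ rep gB k).
  split; [|split; [|split]].
  - intros t Ht. rewrite !in_app_iff in Ht.
    destruct Ht as [H|[H|[H|[H|[H|H]]]]]; auto.
    + apply In_rep in H as [j [_ H]].
      destruct (good_sh _ _ (3*j-3*K) (3*j+3*K) good_CA box_CA) as [_ [_ [h _]]]; auto.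
    + apply In_rep in H as [j [_ H]].
      destruct (good_sh _ _ (3*M-3*j) (3*M+3*j) good_CB box_CB) as [_ [_ [h _]]]; auto.
  - intros t Ht c Hc. rg Ht Hc; unfold aztec_rect; lia.
  - intros [x y] Hxy. unfold aztec_rect in Hxy; cbn [fst snd] in Hxy.
    assert (IA : forall t, In t LGA -> In t (ts ++ LGA ++ LGB ++ LR ++ rep gA m ++ rep gB k))
      by (intros; rewrite !in_app_iff; tauto).
    assert (IB : forall t, In t LGB -> In t (ts ++ LGA ++ LGB ++ LR ++ rep gA m ++ rep gB k))
      by (intros; rewrite !in_app_iff; tauto).
    assert (IR : forall t, In t LR -> In t (ts ++ LGA ++ LGB ++ LR ++ rep gA m ++ rep gB k))
      by (intros; rewrite !in_app_iff; tauto).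
    assert (IO : forall t, In t ts -> In t (ts ++ LGA ++ LGB ++ LR ++ rep gA m ++ rep gB k))
      by (intros; rewrite !in_app_iff; tauto).
    assert (ICA : forall j t, 0 <= j < M -> In t (gA j) ->
       In t (ts ++ LGA ++ LGB ++ LR ++ rep gA m ++ rep gB k))
      by (intros j t Hj Ht; rewrite !in_app_iff; do 4 right; left; apply In_rep; eauto).
    assert (ICB : forall j t, 0 <= j < K -> In t (gB j) ->
       In t (ts ++ LGA ++ LGB ++ LR ++ rep gA m ++ rep gB k))
      by (intros j t Hj Ht; rewrite !in_app_iff; do 5 right; apply In_rep; eauto).
    destruct (Z_le_gt_dec (6*K+6) (y-x)).
    + destruct (Z_le_gt_dec (x+y) 2).
      * destruct (kGA (x,y)) as [t [Ht Hin]]; [apply pGA_spec; cbn [fst snd]; lia|].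
        exists t; auto.
      * destruct (Z_le_gt_dec (x+y) (6*M+2)).
        -- pose proof (Z.div_mod (x+y-3) 6 ltac:(lia)) as D1.
           pose proof (Z.mod_pos_bound (x+y-3) 6 ltac:(lia)) as D2.
           set (j := (x+y-3)/6) in *. set (r := (x+y-3) mod 6) in *.
           destruct (good_sh _ _ (3*j-3*K) (3*j+3*K) good_CA box_CA) as [_ [_ [_ h]]].
           destruct (h (x,y)) as [t [Ht Hin]]; [apply pCA_spec; cbn [fst snd]; lia|].
           exists t; split; auto. apply (ICA j); auto. lia.
        -- destruct (kR (x,y)) as [t [Ht Hin]]; [apply pR_spec; cbn [fst snd]; lia|].
           exists t; auto.
    + destruct (Z_le_gt_dec (x+y) (6*M+4)).
      * destruct (Hcov (x,y)) as [t [Ht Hin]]; [unfold aztec_rect; cbn [fst snd]; lia|].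
        exists t; auto.
      * destruct (Z_le_gt_dec (y-x) 3).
        -- destruct (kGB (x,y)) as [t [Ht Hin]]; [apply pGB_spec; cbn [fst snd]; lia|].
           exists t; auto.
        -- destruct (Z_le_gt_dec (y-x) (6*K+3)).
           ++ pose proof (Z.div_mod (y-x-4) 6 ltac:(lia)) as D1.
              pose proof (Z.mod_pos_bound (y-x-4) 6 ltac:(lia)) as D2.
              set (j := (y-x-4)/6) in *. set (r := (y-x-4) mod 6) in *.
              destruct (good_sh _ _ (3*M-3*j) (3*M+3*j) good_CB box_CB) as [_ [_ [_ h]]].
              destruct (h (x,y)) as [t [Ht Hin]]; [apply pCB_spec; cbn [fst snd]; lia|].
              exists t; split; auto. apply (ICB j); auto. lia.
           ++ destruct (kR (x,y)) as [t [Ht Hin]]; [apply pR_spec; cbn [fst snd]; lia|].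
              exists t; auto.
  - apply pw_nth.
    assert (pA : pw (rep gA m)).
    { apply pw_rep with (Q := fun j c => 6*j+3 <= fst c + snd c <= 6*j+8).
      - intros j. destruct (good_sh _ _ (3*j-3*K) (3*j+3*K) good_CA box_CA) as [_ [h _]]; auto.
      - intros j t c Ht Hc. apply (cA j t c Ht Hc).
      - intros; lia. }
    assert (pB : pw (rep gB k)).
    { apply pw_rep with (Q := fun j c => 6*j+4 <= snd c - fst c <= 6*j+9).
      - intros j. destruct (good_sh _ _ (3*M-3*j) (3*M+3*j) good_CB box_CB) as [_ [h _]]; auto.
      - intros j t c Ht Hc. apply (cB j t c Ht Hc).
      - intros; lia. }
    repeat (apply pw_app2; [auto| |intros t1 t2 c H1 H2 C1 C2; rg H1 C1; rg H2 C2; lia]).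
    auto.
Qed.
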